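(* Let $\mathcal{F}$ be a finite set of graphs, $T\ge0$, and let $(G_1,y_1),\dots,(G_s,y_s)\in\mathcal{G}_n\times\{0,1\}$ be a sample (with both labels occurring) such that $(\phi^{(T)}_{\mathsf{WLOA}}(G_i),y_i)_{i\le s}$ is linearly separable with margin $\gamma$. If $$\min_{y_i\ne y_j}\Big(\big\|\phi^{(T)}_{\mathsf{WLOA},\mathcal{F}}(G_i)-\phi^{(T)}_{\mathsf{WLOA},\mathcal{F}}(G_j)\big\|^2-\big\|\phi^{(T)}_{\mathsf{WLOA}}(G_i)-\phi^{(T)}_{\mathsf{WLOA}}(G_j)\big\|^2\Big)>\max_{y_i=y_j}\Big(\big\|\phi^{(T)}_{\mathsf{WLOA},\mathcal{F}}(G_i)-\phi^{(T)}_{\mathsf{WLOA},\mathcal{F}}(G_j)\big\|^2-\big\|\phi^{(T)}_{\mathsf{WLOA}}(G_i)-\phi^{(T)}_{\mathsf{WLOA}}(G_j)\big\|^2\Big),$$ then the margin $\lambda$ of the sample $(\phi^{(T)}_{\mathsf{WLOA},\mathcal{F}}(G_i),y_i)_{i\le s}$ satisfies $\lambda>\gamma$.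
   Context: $\mathcal{G}_n$ is the set of (unlabeled, simple, undirected) graphs on $n$ vertices. $1$-WL: $C^1_0$ constant, $C^1_t(v)=\mathsf{RELABEL}(C^1_{t-1}(v),\{\!\{C^1_{t-1}(u):u\in N(v)\}\!\})$ with a fixed injective $\mathsf{RELABEL}$ shared by all graphs. $1$-WL$_{\mathcal{F}}$: same update with initial colour $(\ell_F(v))_{F\in\mathcal{F}}$, $\ell_F(v)=1$ if $v$ lies in a vertex set $X$ with induced subgraph $G[X]$ isomorphic to $F$, else $0$. With $\phi_t(G)_c$ (resp. $\phi_{\mathcal{F},t}(G)_c$) the number of vertices of $G$ of colour $c$ at round $t$, $\phi^{(T)}_{\mathsf{WLOA}}(G)$ is the $0/1$ vector with one coordinate per $(t,c,j)$ ($t\le T$, $c$ a round-$t$ colour, $j\in\{1,\dots,n\}$) equal to $1$ iff $\phi_t(G)_c\ge j$; $\phi^{(T)}_{\mathsf{WLOA},\mathcal{F}}$ likewise from the $1$-WL$_{\mathcal{F}}$ counts. The margin of a linearly separable labelled sample is half the Euclidean distance between the convex hulls of the two classes (the hard-margin SVM margin). *)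

(* Defs.v *)
From HB Require Import structures.
From mathcomp Require Import all_boot all_order all_algebra.
From mathcomp Require Import classical_sets reals.
Set Implicit Arguments. Unset Strict Implicit. Unset Printing Implicit Defensive.
Import Order.TTheory GRing.Theory Num.Theory.
Local Open Scope ring_scope.

Record graph (n : nat) := Graph {
  adj : rel 'I_n;
  adj_sym : symmetric adj;
  adj_irr : irreflexive adj }.

Definition pattern := {k : nat & graph k}.

(** v lies in a vertex set X with G[X] isomorphic to F: X is the image of an
    injective map f : V(F) -> V(G) that is an isomorphism onto G[X]. *)
Definition in_induced_copy n (G : graph n) k (F : graph k) (v : 'I_n) : bool :=
  [exists f : {ffun 'I_k -> 'I_n},
     [&& injectiveb f, v \in codom f &
         [forall a, forall b, adj F a b == adj G (f a) (f b)]]].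

Definition lbl (Fs : seq pattern) n (G : graph n) (v : 'I_n) : seq bool :=
  [seq in_induced_copy G (projT2 F) v | F <- Fs].

Section WL.
Variable R : realType.
Variable C : eqType.
(* RELABEL; the multiset of neighbour colours is given as a list, and the
   theorem assumes RELABEL only depends on its multiset (perm_eq) and is
   injective on (colour, multiset) pairs. *)
Variable relabel : C -> seq C -> C.

Definition relabel_multiset :=
  forall c s t, perm_eq s t -> relabel c s = relabel c t.
Definition relabel_injective :=
  forall c d s t, relabel c s = relabel d t -> c = d /\ perm_eq s t.

Fixpoint wl_col n (G : graph n) (chi0 : 'I_n -> C) (t : nat) (v : 'I_n) : C :=
  match t with
  | 0 => chi0 v
  | t'.+1 => relabel (wl_col G chi0 t' v)
                     [seq wl_col G chi0 t' u | u <- enum 'I_n & adj G v u]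
  end.

Definition wl_count n (G : graph n) chi0 t (c : C) : nat :=
  #|[set v | wl_col G chi0 t v == c]|.

Definition wloa_feat n (G : graph n) chi0 (T : nat) (k : nat * C * nat) : R :=
  let: (t, c, j) := k in
  if [&& t <= T, 0 < j, j <= n & j <= wl_count G chi0 t c]%N then 1 else 0.

(** a finite list of coordinates outside of which wloa_feat vanishes *)
Definition wloa_supp n (G : graph n) chi0 (T : nat) : seq (nat * C * nat) :=
  flatten [seq [seq (t, wl_col G chi0 t v, j) | j <- iota 1 n]
          | t <- iota 0 T.+1, v <- enum 'I_n].
End WL.

Section Margin.
Variables (R : realType) (I : eqType).

Definition sqnorm (supp : seq I) (x : I -> R) : R :=
  \sum_(k <- undup supp) x k ^+ 2.

Definition sqdist (supp : seq I) (x y : I -> R) : R :=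
  sqnorm supp (fun k => x k - y k).

Definition convex_weights s (ys : 'I_s -> bool) (lab : bool) (a : 'I_s -> R) :=
  [/\ forall i, 0 <= a i, forall i, ys i != lab -> a i = 0 & \sum_i a i = 1].

Definition hull_dists (supp : seq I) s (xs : 'I_s -> I -> R) (ys : 'I_s -> bool)
  : set R :=
  [set d | exists a b, [/\ convex_weights ys true a, convex_weights ys false b &
     d = Num.sqrt (sqnorm supp (fun k => \sum_i a i * xs i k - \sum_i b i * xs i k))]].

(** hard-margin SVM margin: half the distance between the convex hulls *)
Definition margin (supp : seq I) s (xs : 'I_s -> I -> R) ys : R :=
  inf (hull_dists supp xs ys) / 2.

Definition lin_separable (supp : seq I) s (xs : 'I_s -> I -> R) (ys : 'I_s -> bool) :=
  exists (w : I -> R) (b : R), forall i,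
    if ys i then b < \sum_(k <- undup supp) w k * xs i k
    else \sum_(k <- undup supp) w k * xs i k < b.
End Margin.

Definition phi_WLOA (R : realType) (C : eqType) (relabel : C -> seq C -> C) (c0 : C)
  (T : nat) n (G : graph n) : nat * C * nat -> R :=
  wloa_feat R relabel G (fun _ => c0) T.
Definition phi_WLOA_F (R : realType) (C : eqType) (relabel : C -> seq C -> C)
  (init : seq bool -> C) (Fs : seq pattern) (T : nat) n (G : graph n)
  : nat * C * nat -> R :=
  wloa_feat R relabel G (fun v => init (lbl Fs G v)) T.

Definition supp_WLOA (C : eqType) (relabel : C -> seq C -> C) (c0 : C) (T : nat)
  n s (Gs : 'I_s -> graph n) : seq (nat * C * nat) :=
  flatten [seq wloa_supp relabel (Gs i) (fun _ => c0) T | i <- enum 'I_s].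
Definition supp_WLOA_F (C : eqType) (relabel : C -> seq C -> C)
  (init : seq bool -> C) (Fs : seq pattern) (T : nat)
  n s (Gs : 'I_s -> graph n) : seq (nat * C * nat) :=
  flatten [seq wloa_supp relabel (Gs i) (fun v => init (lbl Fs (Gs i) v)) T
          | i <- enum 'I_s].

(* Main.v *)
Require Import Defs.
From HB Require Import structures.
From mathcomp Require Import all_boot all_order all_algebra.
From mathcomp Require Import classical_sets reals.
From mathcomp Require Import ring lra.
Import Order.TTheory GRing.Theory Num.Theory.
Set Implicit Arguments. Unset Strict Implicit.
Local Open Scope ring_scope.

Lemma ex_min (R : realType) (I : finType) (P : pred I) (F : I -> R) i0 :
  P i0 -> exists j, P j /\ forall i, P i -> F j <= F i.
Proof.
move=> Pi0; case: (@arg_minP _ R I i0 P F Pi0) => j Pj H.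
by exists j; split.
Qed.

Lemma ex_max (R : realType) (I : finType) (P : pred I) (F : I -> R) i0 :
  P i0 -> exists j, P j /\ forall i, P i -> F i <= F j.
Proof.
move=> Pi0; case: (@arg_maxP _ R I i0 P F Pi0) => j Pj H.
by exists j; split.
Qed.

Section Alg.
Variables (R : realType) (s : nat).
Implicit Types (a c : 'I_s -> R) (v : 'I_s -> R).

Definition P2 a c (f : 'I_s -> 'I_s -> R) := \sum_i \sum_j a i * c j * f i j.

Lemma P2_pt a c v :
  P2 a c (fun i j => (v i - v j) ^+ 2) =
  (\sum_i a i * v i ^+ 2) * (\sum_j c j) + (\sum_i a i) * (\sum_j c j * v j ^+ 2)
  - 2 * ((\sum_i a i * v i) * (\sum_j c j * v j)).
Proof.
rewrite /P2.
have E : forall i j, a i * c j * (v i - v j) ^+ 2 =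
   a i * v i ^+ 2 * c j + a i * (c j * v j ^+ 2) - 2 * (a i * v i * (c j * v j)).
  by move=> i j; ring.
under eq_bigr do under eq_bigr do rewrite E.
under eq_bigr do rewrite sumrB big_split /= -!mulr_sumr.
rewrite sumrB big_split /= -!mulr_sumr -!mulr_suml.
done.
Qed.

Lemma pt_ident a b v : \sum_i a i = 1 -> \sum_i b i = 1 ->
  (\sum_i a i * v i - \sum_i b i * v i) ^+ 2 =
  P2 a b (fun i j => (v i - v j) ^+ 2)
  - 2^-1 * P2 a a (fun i j => (v i - v j) ^+ 2)
  - 2^-1 * P2 b b (fun i j => (v i - v j) ^+ 2).
Proof.
move=> sa sb; rewrite !P2_pt sa sb; field; lra.
Qed.

Definition Phi a b f := P2 a b f - 2^-1 * P2 a a f - 2^-1 * P2 b b f.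

Lemma P2_sum (J : eqType) (r : seq J) a c (g : J -> 'I_s -> 'I_s -> R) :
  P2 a c (fun i j => \sum_(k <- r) g k i j) = \sum_(k <- r) P2 a c (g k).
Proof.
rewrite /P2; under eq_bigr do under eq_bigr do rewrite mulr_sumr.
under eq_bigr do rewrite exchange_big /=.
by rewrite exchange_big.
Qed.

Lemma P2_sub a c f g : P2 a c f - P2 a c g = P2 a c (fun i j => f i j - g i j).
Proof.
rewrite /P2 -sumrB; apply: eq_bigr => i _; rewrite -sumrB; apply: eq_bigr => j _.
by rewrite mulrBr.
Qed.

Lemma Phi_sub a b f g : Phi a b f - Phi a b g = Phi a b (fun i j => f i j - g i j).
Proof. rewrite /Phi -!P2_sub; ring. Qed.

Lemma key (I : eqType) (supp : seq I) (xs : 'I_s -> I -> R) a b :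
  \sum_i a i = 1 -> \sum_i b i = 1 ->
  sqnorm supp (fun k => \sum_i a i * xs i k - \sum_i b i * xs i k) =
  Phi a b (fun i j => sqdist supp (xs i) (xs j)).
Proof.
move=> sa sb; rewrite /Phi /sqdist /sqnorm !P2_sum !mulr_sumr -!sumrB.
by apply: eq_bigr => k _; rewrite pt_ident.
Qed.
End Alg.

Section Bound.
Variables (R : realType) (s : nat).

Lemma P2_const (a c : 'I_s -> R) m : P2 a c (fun _ _ => m) = (\sum_i a i) * (\sum_j c j) * m.
Proof.
rewrite /P2 mulr_suml mulr_suml; apply: eq_bigr => i _.
by rewrite mulr_sumr mulr_suml.
Qed.

Lemma wt_nz (ys : 'I_s -> bool) lab (a : 'I_s -> R) i : convex_weights ys lab a -> a i != 0 -> ys i = lab.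
Proof.
case=> _ hz _ ai; apply/eqP; apply: contraNT ai => /hz ->; by [].
Qed.

Lemma Phi_lb (ys : 'I_s -> bool) a b (D : 'I_s -> 'I_s -> R) m M :
 convex_weights ys true a -> convex_weights ys false b ->
 (forall i j, ys i != ys j -> m <= D i j) -> (forall k l, ys k = ys l -> D k l <= M) ->
 m - M <= Phi a b D.
Proof.
move=> wa wb Hm HM.
have [a0 _ sa] := wa; have [b0 _ sb] := wb.
have h1 : m <= P2 a b D.
  have -> : m = P2 a b (fun _ _ => m) by rewrite P2_const sa sb !mul1r.
  apply: ler_sum => i _; apply: ler_sum => j _.
  case: (eqVneq (a i) 0) => [->|ai]; first by rewrite !mul0r.
  case: (eqVneq (b j) 0) => [->|bj]; first by rewrite mulr0 !mul0r.
  apply: ler_wpM2l; first by apply: mulr_ge0.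
  by apply: Hm; rewrite (wt_nz wa ai) (wt_nz wb bj).
have h2 : forall c lab, convex_weights ys lab c -> P2 c c D <= M.
  move=> c lab wc; have [c0 _ sc] := wc.
  have -> : M = P2 c c (fun _ _ => M) by rewrite P2_const sc !mul1r.
  apply: ler_sum => i _; apply: ler_sum => j _.
  case: (eqVneq (c i) 0) => [->|ci]; first by rewrite !mul0r.
  case: (eqVneq (c j) 0) => [->|cj]; first by rewrite mulr0 !mul0r.
  apply: ler_wpM2l; first by apply: mulr_ge0.
  by apply: HM; rewrite (wt_nz wc ci) (wt_nz wc cj).
have := h2 _ _ wa; have := h2 _ _ wb; rewrite /Phi; lra.
Qed.
End Bound.

Theorem theorem17 (R : realType) (C : eqType) (relabel : C -> seq C -> C)
  (c0 : C) (init : seq bool -> C)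
  (Hms : relabel_multiset relabel) (Hinj : relabel_injective relabel)
  (Hinit : injective init)
  (Fs : seq pattern) (T n s : nat) (Gs : 'I_s -> graph n) (ys : 'I_s -> bool)
  (gamma : R) :
  let x := fun i => phi_WLOA R relabel c0 T (Gs i) in
  let xF := fun i => phi_WLOA_F R relabel init Fs T (Gs i) in
  let S := supp_WLOA relabel c0 T Gs in
  let SF := supp_WLOA_F relabel init Fs T Gs in
  let D := fun i j => sqdist SF (xF i) (xF j) - sqdist S (x i) (x j) in
  (exists i, ys i) -> (exists i, ~~ ys i) ->
  lin_separable S x ys -> gamma = margin S x ys ->
  (forall i j k l, ys i != ys j -> ys k = ys l -> D k l < D i j) ->
  gamma < margin SF xF ys.
Proof.
move=> x xF S SF D [i1 yi1] [i0 yi0] _ -> HD.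
have Pc : ys i1 != ys i0 by rewrite yi1; case: (ys i0) yi0.
have [p [Pp Hp]] := @ex_min R _ (fun p : 'I_s * 'I_s => ys p.1 != ys p.2)
   (fun p => D p.1 p.2) (i1, i0) Pc.
have [q [Pq Hq]] := @ex_max R _ (fun p : 'I_s * 'I_s => ys p.1 == ys p.2)
   (fun p => D p.1 p.2) (i1, i1) (eqxx _).
set m := D p.1 p.2 in Hp; set M := D q.1 q.2 in Hq.
have dpos : 0 < m - M by rewrite subr_gt0; apply: HD => //; apply/eqP.
have Hm : forall i j, ys i != ys j -> m <= D i j by move=> i j h; exact: (Hp (i, j)).
have HM : forall k l, ys k = ys l -> D k l <= M by move=> k l /eqP h; exact: (Hq (k, l)).
pose ind (k : 'I_s) : 'I_s -> R := fun i => (i == k)%:R.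
have sind : forall k, \sum_i ind k i = 1.
  by move=> k; rewrite (bigD1 k) //= /ind eqxx big1 ?addr0 // => i /negbTE ->.
have wind : forall k, convex_weights ys (ys k) (ind k).
  move=> k; split.
  - by move=> i; rewrite /ind ler0n.
  - by move=> i; rewrite /ind; case: (eqVneq i k) => [->|]; [rewrite eqxx|].
  - exact: sind.
have sq0 : forall (I : eqType) (supp : seq I) (f : I -> R), 0 <= sqnorm supp f.
  by move=> I supp f; rewrite /sqnorm; apply: sumr_ge0 => k _; apply: sqr_ge0.
set g := inf (hull_dists S x ys).
have ne : forall (I : eqType) (supp : seq I) (xs : 'I_s -> I -> R),
    nonempty (hull_dists supp xs ys).
  move=> I supp xs; eexists; exists (ind i1), (ind i0); split.
  - by rewrite -yi1; apply: wind.
  - by rewrite -(negbTE yi0); apply: wind.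
  - reflexivity.
have g0 : 0 <= g.
  apply: lb_le_inf; first exact: ne.
  by move=> d [a [b [_ _ ->]]]; apply: sqrtr_ge0.
have lb : lbound (hull_dists SF xF ys) (Num.sqrt (g ^+ 2 + (m - M))).
  move=> d [a [b [wa wb ->]]].
  have [_ _ sa] := wa; have [_ _ sb] := wb.
  rewrite ler_sqrt; last exact: sq0.
  have hg : g <= Num.sqrt (sqnorm S (fun k => \sum_i a i * x i k - \sum_i b i * x i k)).
    apply: ge_inf; first by exists 0 => d' [a' [b' [_ _ ->]]]; apply: sqrtr_ge0.
    by exists a, b.
  have hg2 : g ^+ 2 <= sqnorm S (fun k => \sum_i a i * x i k - \sum_i b i * x i k).
    rewrite -(sqr_sqrtr (sq0 _ S _)); apply: lerXn2r => //; rewrite nnegrE //.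
    exact: sqrtr_ge0.
  have hl := Phi_lb wa wb Hm HM.
  move: hg2; rewrite !key // => hg2.
  have := Phi_sub a b (fun i j => sqdist SF (xF i) (xF j)) (fun i j => sqdist S (x i) (x j)).
  rewrite -/D => E.
  lra.
have : g < inf (hull_dists SF xF ys).
  apply: (lt_le_trans _ (lb_le_inf (ne _ _ _) lb)).
  rewrite -[X in X < _](@ger0_norm _ g) // -sqrtr_sqr ltr_sqrt; first lra.
  by apply: ltr_wpDl => //; apply: sqr_ge0.
rewrite /margin -/g; lra.
Qed.
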